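(* Let H1 $=i(x,i(y,x))$, H2 $=i(i(x,i(y,z)),i(i(x,y),i(x,z)))$, H3 $=i(i(x,n(x)),n(x))$, H4 $=i(x,i(n(x),y))$. The formulas provable from H1–H4 using condensed detachment as the sole rule of inference are exactly those provable from H1–H4 using modus ponens and substitution. Moreover, if $b$ has a proof by modus ponens from substitution instances of H1–H4 in which no line contains a double negation, then $b$ has a double-negation-free condensed-detachment proof from H1–H4.
   Context: Formulas are terms built from propositional variables using the binary connective $i$ (implication) and the unary connective $n$ (negation). Modus ponens: from $i(p,q)$ and $p$ infer $q$; substitution: from $p$ infer $p\sigma$. Condensed detachment: from a major premiss $i(A,B)$ and a minor premiss $C$, after renaming variables so that the two premisses share no variables, if $A$ and $C$ are unifiable with most general unifier $\sigma$, infer $B\sigma$; alphabetic variants of axioms count as axioms and conclusions may be renamed. A formula contains a double negation if it has a (not necessarily proper) subformula of the form $n(n(t))$; a condensed-detachment proof is double-negation free if none of its deduced (non-axiom) steps contains a double negation. *)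

(* Defs.v *)
From Stdlib Require Import Arith.

Inductive form : Type :=
| V : nat -> form
| I : form -> form -> form
| N : form -> form.

Fixpoint subst (s : nat -> form) (f : form) : form :=
  match f with
  | V x => s x
  | I a b => I (subst s a) (subst s b)
  | N a => N (subst s a)
  end.

Definition ren (r : nat -> nat) (f : form) : form := subst (fun x => V (r x)) f.

Fixpoint occurs (x : nat) (f : form) : Prop :=
  match f with
  | V y => x = y
  | I a b => occurs x a \/ occurs x b
  | N a => occurs x a
  end.

Definition variant (g f : form) : Prop :=
  exists r : nat -> nat, (forall x y, r x = r y -> x = y) /\ g = ren r f.

Definition disjoint_vars (f g : form) : Prop :=
  forall x, occurs x f -> ~ occurs x g.

Definition unifier (s : nat -> form) (a b : form) : Prop := subst s a = subst s b.

Definition mgu (s : nat -> form) (a b : form) : Prop :=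
  unifier s a b /\
  forall t, unifier t a b -> exists r, forall x, t x = subst r (s x).

(* x = V 0, y = V 1, z = V 2 *)
Definition H1 : form := I (V 0) (I (V 1) (V 0)).
Definition H2 : form :=
  I (I (V 0) (I (V 1) (V 2))) (I (I (V 0) (V 1)) (I (V 0) (V 2))).
Definition H3 : form := I (I (V 0) (N (V 0))) (N (V 0)).
Definition H4 : form := I (V 0) (I (N (V 0)) (V 1)).

Definition is_axiom (a : form) : Prop := a = H1 \/ a = H2 \/ a = H3 \/ a = H4.

Fixpoint has_dn (f : form) : Prop :=
  match f with
  | V _ => False
  | I a b => has_dn a \/ has_dn b
  | N a => (match a with N _ => True | _ => False end) \/ has_dn a
  end.

(* provability by condensed detachment; dnf = true restricts every deduced
   step to be double-negation free *)
Inductive CDprov (dnf : bool) : form -> Prop :=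
| cd_ax : forall a f, is_axiom a -> variant f a -> CDprov dnf f
| cd_step : forall M C M' C' A B s f,
    CDprov dnf M -> CDprov dnf C ->
    variant M' M -> variant C' C -> M' = I A B ->
    disjoint_vars M' C' ->
    mgu s A C' ->
    variant f (subst s B) ->
    (dnf = true -> ~ has_dn f) ->
    CDprov dnf f.

Inductive MPprov : form -> Prop :=
| mp_ax : forall a, is_axiom a -> MPprov a
| mp_sub : forall s f, MPprov f -> MPprov (subst s f)
| mp_mp : forall a b, MPprov (I a b) -> MPprov a -> MPprov b.

Inductive MPinst_dnf : form -> Prop :=
| mpi_ax : forall a s, is_axiom a -> ~ has_dn (subst s a) -> MPinst_dnf (subst s a)
| mpi_mp : forall a b, MPinst_dnf (I a b) -> MPinst_dnf a -> ~ has_dn b -> MPinst_dnf b.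

(* Main.v *)
Require Import Defs.
From Stdlib Require Import Arith Lia List Bool.
Import ListNotations.

Fixpoint maxvar (f : form) : nat :=
  match f with V x => x | I a b => Nat.max (maxvar a) (maxvar b) | N a => maxvar a end.

Lemma occurs_le x f : occurs x f -> x <= maxvar f.
Proof. induction f; simpl; intuition; subst; lia. Qed.

Fixpoint occb (x : nat) (f : form) : bool :=
  match f with V y => Nat.eqb x y | I a b => occb x a || occb x b | N a => occb x a end.

Lemma occb_spec x f : occb x f = true <-> occurs x f.
Proof.
  induction f; simpl.
  - apply Nat.eqb_eq.
  - rewrite orb_true_iff, IHf1, IHf2; tauto.
  - auto.
Qed.

Lemma occb_false x f : occb x f = false <-> ~ occurs x f.
Proof. rewrite <- occb_spec. destruct (occb x f); split; congruence. Qed.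

Lemma subst_ext s1 s2 f : (forall x, occurs x f -> s1 x = s2 x) -> subst s1 f = subst s2 f.
Proof.
  induction f; simpl; intros H.
  - apply H; reflexivity.
  - rewrite IHf1, IHf2 by auto; reflexivity.
  - rewrite IHf by auto; reflexivity.
Qed.

Lemma subst_eq_occ s1 s2 f x : subst s1 f = subst s2 f -> occurs x f -> s1 x = s2 x.
Proof.
  induction f; simpl; intros H Ho.
  - subst; exact H.
  - injection H; intros; destruct Ho; eauto.
  - injection H; intros; eauto.
Qed.

Lemma subst_comp s1 s2 f : subst s1 (subst s2 f) = subst (fun x => subst s1 (s2 x)) f.
Proof. induction f; simpl; congruence. Qed.

Lemma subst_id f : subst V f = f.
Proof. induction f; simpl; congruence. Qed.

Lemma occurs_subst x s f : occurs x (subst s f) <-> exists y, occurs y f /\ occurs x (s y).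
Proof.
  induction f; simpl.
  - split; [intros; exists n; auto | intros [y [-> H]]; auto].
  - rewrite IHf1, IHf2. split.
    + intros [[y [? ?]]|[y [? ?]]]; eauto.
    + intros [y [[?|?] ?]]; eauto.
  - auto.
Qed.

Lemma occurs_ren x r f : occurs x (ren r f) <-> exists y, occurs y f /\ x = r y.
Proof. unfold ren. rewrite occurs_subst. simpl. reflexivity. Qed.

Lemma has_dn_subst_ren r f : has_dn (subst (fun x => V (r x)) f) <-> has_dn f.
Proof.
  induction f; simpl.
  - tauto.
  - rewrite IHf1, IHf2; tauto.
  - rewrite IHf. destruct f; simpl; tauto.
Qed.

Lemma has_dn_ren r f : has_dn (ren r f) <-> has_dn f.
Proof. apply has_dn_subst_ren. Qed.

Lemma variant_refl f : variant f f.
Proof. exists (fun x => x). split; auto. unfold ren. symmetry. apply subst_id. Qed.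

Lemma variant_eq f g : f = g -> variant f g.
Proof. intros ->; apply variant_refl. Qed.

Lemma cd_variant d f r : CDprov d f -> (forall x y, r x = r y -> x = y) -> CDprov d (ren r f).
Proof.
  intros H Hr. destruct H as [a f Ha [r1 [Hr1 ->]] | M C M' C' A B s f HM HC HM' HC' HMe Hdis Hmgu [r1 [Hr1 ->]] Hdn].
  - apply cd_ax with a; auto. exists (fun x => r (r1 x)). split; [auto|].
    unfold ren; rewrite subst_comp; reflexivity.
  - apply cd_step with M C M' C' A B s; auto.
    + exists (fun x => r (r1 x)). split; [auto|]. unfold ren; rewrite subst_comp; reflexivity.
    + intros Hd. rewrite has_dn_ren, has_dn_ren. apply Hdn in Hd. rewrite has_dn_ren in Hd. exact Hd.
Qed.

Definition swp (P : nat -> bool) (K z : nat) : nat :=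
  if P z then K + z else if (K <=? z) && P (z - K) then z - K else z.

Lemma swp_inv P K z : (forall y, P y = true -> y < K) -> swp P K (swp P K z) = z.
Proof.
  intros HP. unfold swp.
  destruct (P z) eqn:E1.
  - assert (z < K) by auto.
    destruct (P (K + z)) eqn:E2; [apply HP in E2; lia|].
    replace (K + z - K) with z by lia. rewrite E1.
    replace (K <=? K + z) with true by (symmetry; apply Nat.leb_le; lia). reflexivity.
  - destruct ((K <=? z) && P (z - K)) eqn:E2.
    + apply andb_true_iff in E2. destruct E2 as [E2 E3]. apply Nat.leb_le in E2.
      rewrite E3. lia.
    + rewrite E1, E2. reflexivity.
Qed.

Lemma swp_inj P K : (forall y, P y = true -> y < K) -> forall x y, swp P K x = swp P K y -> x = y.
Proof. intros HP x y H. rewrite <- (swp_inv P K x HP), <- (swp_inv P K y HP), H. reflexivity. Qed.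

Lemma swp_in P K z : P z = true -> swp P K z = K + z.
Proof. unfold swp; intros ->; reflexivity. Qed.

Lemma swp_out P K z : P z = false -> z < K -> swp P K z = z.
Proof.
  unfold swp; intros -> Hz.
  replace (K <=? z) with false by (symmetry; apply Nat.leb_gt; lia). reflexivity.
Qed.

Lemma P2 d A B C (sg : nat -> form) :
  CDprov d (I A B) -> CDprov d C -> subst sg A = C ->
  (forall x, occurs x B -> ~ occurs x A -> sg x = V x /\ ~ occurs x C) ->
  (d = true -> ~ has_dn (subst sg B)) -> CDprov d (subst sg B).
Proof.
  intros HM HC HA HB Hdn.
  set (K := S (Nat.max (maxvar (I A B)) (maxvar C))).
  assert (HPA : forall y, occb y A = true -> y < K).
  { intros y Hy. apply occb_spec, occurs_le in Hy. unfold K; simpl. lia. }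
  assert (HKB : forall y, occurs y B -> y < K).
  { intros y Hy. apply occurs_le in Hy. unfold K; simpl. lia. }
  assert (HKC : forall y, occurs y C -> y < K).
  { intros y Hy. apply occurs_le in Hy. unfold K; simpl. lia. }
  set (rho := swp (fun z => occb z A) K).
  set (s := fun z => if (K <=? z) && occb (z - K) A then sg (z - K) else V z).
  assert (Hs1 : forall y, occurs y A -> s (rho y) = sg y).
  { intros y Hy. apply occb_spec in Hy. unfold rho, s. rewrite swp_in by auto.
    replace (K + y - K) with y by lia. rewrite Hy.
    replace (K <=? K + y) with true by (symmetry; apply Nat.leb_le; lia). reflexivity. }
  assert (Hs2 : forall y, y < K -> s y = V y).
  { intros y Hy. unfold s. replace (K <=? y) with false by (symmetry; apply Nat.leb_gt; lia). reflexivity. }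
  assert (HsC : subst s C = C).
  { rewrite <- (subst_id C) at 2. apply subst_ext. intros; apply Hs2; auto. }
  assert (HsA : subst s (ren rho A) = C).
  { unfold ren; rewrite subst_comp. rewrite <- HA. apply subst_ext. intros; simpl; apply Hs1; auto. }
  apply cd_step with (M := I A B) (C := C) (M' := ren rho (I A B)) (C' := C)
    (A := ren rho A) (B := ren rho B) (s := s).
  - exact HM.
  - exact HC.
  - exists rho. split; [apply swp_inj; auto | reflexivity].
  - apply variant_refl.
  - reflexivity.
  - intros x Hx Hc. rewrite occurs_ren in Hx. destruct Hx as [y [Hy ->]].
    destruct (occb y A) eqn:E.
    + unfold rho in Hc. rewrite swp_in in Hc by auto. apply HKC in Hc. lia.
    + unfold rho in Hc. rewrite swp_out in Hc; auto.
      * apply occb_false in E. simpl in Hy. destruct Hy as [Hy|Hy]; [tauto|].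
        apply (HB y Hy E). exact Hc.
      * simpl in Hy; destruct Hy; [apply occb_false in E; tauto| auto].
  - split.
    + unfold unifier. rewrite HsA, HsC. reflexivity.
    + intros t Ht. exists t. intros z. unfold s.
      destruct ((K <=? z) && occb (z - K) A) eqn:E; [|reflexivity].
      apply andb_true_iff in E. destruct E as [E1 E2]. apply Nat.leb_le in E1.
      unfold unifier in Ht. rewrite <- HA in Ht. unfold ren in Ht. rewrite !subst_comp in Ht.
      apply occb_spec in E2.
      pose proof (subst_eq_occ _ _ _ _ Ht E2) as H. simpl in H.
      unfold rho in H. rewrite swp_in in H by (apply occb_spec; auto).
      replace (K + (z - K)) with z in H by lia. exact H.
  - apply variant_eq. unfold ren; rewrite subst_comp. apply subst_ext. intros y Hy. simpl.
    destruct (occb y A) eqn:E.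
    + symmetry. apply Hs1. apply occb_spec; auto.
    + apply occb_false in E. unfold rho. rewrite swp_out by (auto; apply occb_false; auto).
      rewrite Hs2 by auto. destruct (HB y Hy E) as [-> _]. reflexivity.
  - exact Hdn.
Qed.

Lemma P1 d A B C (sg : nat -> form) :
  CDprov d (I A B) -> CDprov d C -> subst sg C = A ->
  (d = true -> ~ has_dn B) -> CDprov d B.
Proof.
  intros HM HC HA Hdn.
  set (K := S (Nat.max (maxvar (I A B)) (maxvar C))).
  assert (HPC : forall y, occb y C = true -> y < K).
  { intros y Hy. apply occb_spec, occurs_le in Hy. unfold K; simpl. lia. }
  assert (HKA : forall y, occurs y A -> y < K).
  { intros y Hy. apply occurs_le in Hy. unfold K; simpl. lia. }
  assert (HKB : forall y, occurs y B -> y < K).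
  { intros y Hy. apply occurs_le in Hy. unfold K; simpl. lia. }
  set (rho := swp (fun z => occb z C) K).
  set (s := fun z => if (K <=? z) && occb (z - K) C then sg (z - K) else V z).
  assert (Hs1 : forall y, occurs y C -> s (rho y) = sg y).
  { intros y Hy. apply occb_spec in Hy. unfold rho, s. rewrite swp_in by auto.
    replace (K + y - K) with y by lia. rewrite Hy.
    replace (K <=? K + y) with true by (symmetry; apply Nat.leb_le; lia). reflexivity. }
  assert (Hs2 : forall y, y < K -> s y = V y).
  { intros y Hy. unfold s. replace (K <=? y) with false by (symmetry; apply Nat.leb_gt; lia). reflexivity. }
  assert (HsA : subst s A = A).
  { rewrite <- (subst_id A) at 2. apply subst_ext. intros; apply Hs2; auto. }
  assert (HsB : subst s B = B).
  { rewrite <- (subst_id B) at 2. apply subst_ext. intros; apply Hs2; auto. }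
  assert (HsC : subst s (ren rho C) = A).
  { unfold ren; rewrite subst_comp. rewrite <- HA. apply subst_ext. intros; simpl; apply Hs1; auto. }
  apply cd_step with (M := I A B) (C := C) (M' := I A B) (C' := ren rho C)
    (A := A) (B := B) (s := s).
  - exact HM.
  - exact HC.
  - apply variant_refl.
  - exists rho. split; [apply swp_inj; auto | reflexivity].
  - reflexivity.
  - intros x Hx Hc. rewrite occurs_ren in Hc. destruct Hc as [y [Hy ->]].
    unfold rho in Hx. rewrite swp_in in Hx by (apply occb_spec; auto).
    simpl in Hx. assert (K + y < K) by (destruct Hx; auto). lia.
  - split.
    + unfold unifier. rewrite HsA, HsC. reflexivity.
    + intros t Ht. exists t. intros z. unfold s.
      destruct ((K <=? z) && occb (z - K) C) eqn:E; [|reflexivity].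
      apply andb_true_iff in E. destruct E as [E1 E2]. apply Nat.leb_le in E1.
      unfold unifier in Ht. rewrite <- HA in Ht. unfold ren in Ht. rewrite !subst_comp in Ht.
      apply occb_spec in E2.
      pose proof (subst_eq_occ _ _ _ _ Ht E2) as H. simpl in H.
      unfold rho in H. rewrite swp_in in H by (apply occb_spec; auto).
      replace (K + (z - K)) with z in H by lia. symmetry; exact H.
  - apply variant_eq. symmetry; exact HsB.
  - exact Hdn.
Qed.

Fixpoint sl (l : list (nat * form)) (x : nat) : form :=
  match l with [] => V x | (y, f) :: l' => if Nat.eqb x y then f else sl l' x end.

Lemma sl_mgu l t : Forall (fun p => t (fst p) = subst t (snd p)) l -> forall x, t x = subst t (sl l x).
Proof.
  induction l as [|[y f] l IH]; simpl; intros H x; [reflexivity|].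
  inversion H; subst. destruct (Nat.eqb x y) eqn:E; auto.
  apply Nat.eqb_eq in E; subst; auto.
Qed.

Fixpoint vars (f : form) : list nat :=
  match f with V x => [x] | I a b => vars a ++ vars b | N a => vars a end.

Lemma vars_spec x f : occurs x f <-> In x (vars f).
Proof.
  induction f; simpl.
  - split; [intros ->; auto | intros [->|[]]; auto].
  - rewrite in_app_iff; tauto.
  - auto.
Qed.

Definition disjb f g := forallb (fun x => negb (occb x g)) (vars f).

Lemma disjb_spec f g : disjb f g = true -> disjoint_vars f g.
Proof.
  unfold disjb; intros H x Hx Hg. rewrite forallb_forall in H.
  apply vars_spec in Hx. apply H in Hx. apply occb_spec in Hg. rewrite Hg in Hx. discriminate.
Qed.

Lemma cd_conc d M C k A B l f :
  CDprov d M -> CDprov d C -> M = I A B ->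
  disjb (I A B) (ren (Nat.add k) C) = true ->
  subst (sl l) A = subst (sl l) (ren (Nat.add k) C) ->
  (forall t, subst t A = subst t (ren (Nat.add k) C) -> Forall (fun p => t (fst p) = subst t (snd p)) l) ->
  f = subst (sl l) B -> (d = true -> ~ has_dn f) -> CDprov d f.
Proof.
  intros HM HC HMe Hd Hu Hm Hf Hdn.
  apply cd_step with M C (I A B) (ren (Nat.add k) C) A B (sl l); auto.
  - subst; apply variant_refl.
  - exists (Nat.add k). split; [intros; lia | reflexivity].
  - apply disjb_spec; auto.
  - split; [exact Hu|]. intros t Ht. exists t. apply sl_mgu. auto.
  - subst; apply variant_refl.
Qed.

Lemma ax_H1 d : CDprov d H1. Proof. apply cd_ax with H1; [left; reflexivity | apply variant_refl]. Qed.
Lemma ax_H2 d : CDprov d H2. Proof. apply cd_ax with H2; [right; left; reflexivity | apply variant_refl]. Qed.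
Lemma ax_H3 d : CDprov d H3. Proof. apply cd_ax with H3; [right; right; left; reflexivity | apply variant_refl]. Qed.
Lemma ax_H4 d : CDprov d H4. Proof. apply cd_ax with H4; [right; right; right; reflexivity | apply variant_refl]. Qed.

Ltac mgu_tac := intros t Ht; simpl in Ht;
  repeat (apply Forall_cons; [simpl; congruence|]); apply Forall_nil.
Ltac dn_tac := intros _; simpl; tauto.

Lemma t0 d : CDprov d (I (I (V 3) (V 4)) (I (V 3) (V 3))).
Proof.
  apply (cd_conc d (I (I (V 0) (I (V 1) (V 2))) (I (I (V 0) (V 1)) (I (V 0) (V 2)))) (I (V 0) (I (V 1) (V 0))) 3 (I (V 0) (I (V 1) (V 2))) (I (I (V 0) (V 1)) (I (V 0) (V 2))) [(0, (V 3)); (1, (V 4)); (2, (V 3))]);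
  [exact (ax_H2 d) | exact (ax_H1 d) | reflexivity | reflexivity | reflexivity | mgu_tac | reflexivity | dn_tac].
Qed.

Lemma t1 d : CDprov d (I (V 5) (V 5)).
Proof.
  apply (cd_conc d (I (I (V 3) (V 4)) (I (V 3) (V 3))) (I (V 0) (I (V 1) (V 0))) 5 (I (V 3) (V 4)) (I (V 3) (V 3)) [(3, (V 5)); (4, (I (V 6) (V 5)))]);
  [exact (t0 d) | exact (ax_H1 d) | reflexivity | reflexivity | reflexivity | mgu_tac | reflexivity | dn_tac].
Qed.

Lemma t2 d : CDprov d (I (V 1) (I (I (V 2) (I (V 3) (V 4))) (I (I (V 2) (V 3)) (I (V 2) (V 4))))).
Proof.
  apply (cd_conc d (I (V 0) (I (V 1) (V 0))) (I (I (V 0) (I (V 1) (V 2))) (I (I (V 0) (V 1)) (I (V 0) (V 2)))) 2 (V 0) (I (V 1) (V 0)) [(0, (I (I (V 2) (I (V 3) (V 4))) (I (I (V 2) (V 3)) (I (V 2) (V 4)))))]);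
  [exact (ax_H1 d) | exact (ax_H2 d) | reflexivity | reflexivity | reflexivity | mgu_tac | reflexivity | dn_tac].
Qed.

Lemma t3 d : CDprov d (I (I (V 4) (I (V 5) (I (V 6) (V 7)))) (I (V 4) (I (I (V 5) (V 6)) (I (V 5) (V 7))))).
Proof.
  apply (cd_conc d (I (I (V 0) (I (V 1) (V 2))) (I (I (V 0) (V 1)) (I (V 0) (V 2)))) (I (V 1) (I (I (V 2) (I (V 3) (V 4))) (I (I (V 2) (V 3)) (I (V 2) (V 4))))) 3 (I (V 0) (I (V 1) (V 2))) (I (I (V 0) (V 1)) (I (V 0) (V 2))) [(0, (V 4)); (1, (I (V 5) (I (V 6) (V 7)))); (2, (I (I (V 5) (V 6)) (I (V 5) (V 7))))]);
  [exact (ax_H2 d) | exact (t2 d) | reflexivity | reflexivity | reflexivity | mgu_tac | reflexivity | dn_tac].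
Qed.

Lemma t4 d : CDprov d (I (I (V 6) (V 7)) (I (I (V 9) (V 6)) (I (V 9) (V 7)))).
Proof.
  apply (cd_conc d (I (I (V 4) (I (V 5) (I (V 6) (V 7)))) (I (V 4) (I (I (V 5) (V 6)) (I (V 5) (V 7))))) (I (V 0) (I (V 1) (V 0))) 8 (I (V 4) (I (V 5) (I (V 6) (V 7)))) (I (V 4) (I (I (V 5) (V 6)) (I (V 5) (V 7)))) [(4, (I (V 6) (V 7))); (5, (V 9)); (8, (I (V 6) (V 7)))]);
  [exact (t3 d) | exact (ax_H1 d) | reflexivity | reflexivity | reflexivity | mgu_tac | reflexivity | dn_tac].
Qed.

Lemma t5 d : CDprov d (I (I (V 9) (I (V 16) (V 17))) (I (V 9) (I (I (V 19) (V 16)) (I (V 19) (V 17))))).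
Proof.
  apply (cd_conc d (I (I (V 6) (V 7)) (I (I (V 9) (V 6)) (I (V 9) (V 7)))) (I (I (V 6) (V 7)) (I (I (V 9) (V 6)) (I (V 9) (V 7)))) 10 (I (V 6) (V 7)) (I (I (V 9) (V 6)) (I (V 9) (V 7))) [(6, (I (V 16) (V 17))); (7, (I (I (V 19) (V 16)) (I (V 19) (V 17))))]);
  [exact (t4 d) | exact (t4 d) | reflexivity | reflexivity | reflexivity | mgu_tac | reflexivity | dn_tac].
Qed.

Lemma t6 d : CDprov d (I (I (V 20) (I (V 21) (V 22))) (I (I (V 19) (I (V 20) (V 21))) (I (V 19) (I (V 20) (V 22))))).
Proof.
  apply (cd_conc d (I (I (V 9) (I (V 16) (V 17))) (I (V 9) (I (I (V 19) (V 16)) (I (V 19) (V 17))))) (I (I (V 0) (I (V 1) (V 2))) (I (I (V 0) (V 1)) (I (V 0) (V 2)))) 20 (I (V 9) (I (V 16) (V 17))) (I (V 9) (I (I (V 19) (V 16)) (I (V 19) (V 17)))) [(9, (I (V 20) (I (V 21) (V 22)))); (16, (I (V 20) (V 21))); (17, (I (V 20) (V 22)))]);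
  [exact (t5 d) | exact (ax_H2 d) | reflexivity | reflexivity | reflexivity | mgu_tac | reflexivity | dn_tac].
Qed.

Lemma t7 d : CDprov d (I (I (I (V 23) (I (V 24) (V 25))) (I (V 22) (I (V 23) (V 24)))) (I (I (V 23) (I (V 24) (V 25))) (I (V 22) (I (V 23) (V 25))))).
Proof.
  apply (cd_conc d (I (I (V 0) (I (V 1) (V 2))) (I (I (V 0) (V 1)) (I (V 0) (V 2)))) (I (I (V 20) (I (V 21) (V 22))) (I (I (V 19) (I (V 20) (V 21))) (I (V 19) (I (V 20) (V 22))))) 3 (I (V 0) (I (V 1) (V 2))) (I (I (V 0) (V 1)) (I (V 0) (V 2))) [(0, (I (V 23) (I (V 24) (V 25)))); (1, (I (V 22) (I (V 23) (V 24)))); (2, (I (V 22) (I (V 23) (V 25))))]);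
  [exact (ax_H2 d) | exact (t6 d) | reflexivity | reflexivity | reflexivity | mgu_tac | reflexivity | dn_tac].
Qed.

Lemma t8 d : CDprov d (I (V 1) (I (V 2) (I (V 3) (V 2)))).
Proof.
  apply (cd_conc d (I (V 0) (I (V 1) (V 0))) (I (V 0) (I (V 1) (V 0))) 2 (V 0) (I (V 1) (V 0)) [(0, (I (V 2) (I (V 3) (V 2))))]);
  [exact (ax_H1 d) | exact (ax_H1 d) | reflexivity | reflexivity | reflexivity | mgu_tac | reflexivity | dn_tac].
Qed.

Lemma t9 d : CDprov d (I (I (V 29) (I (V 28) (V 25))) (I (V 28) (I (V 29) (V 25)))).
Proof.
  apply (cd_conc d (I (I (I (V 23) (I (V 24) (V 25))) (I (V 22) (I (V 23) (V 24)))) (I (I (V 23) (I (V 24) (V 25))) (I (V 22) (I (V 23) (V 25))))) (I (V 1) (I (V 2) (I (V 3) (V 2)))) 26 (I (I (V 23) (I (V 24) (V 25))) (I (V 22) (I (V 23) (V 24)))) (I (I (V 23) (I (V 24) (V 25))) (I (V 22) (I (V 23) (V 25)))) [(22, (V 28)); (23, (V 29)); (24, (V 28)); (27, (I (V 29) (I (V 28) (V 25))))]);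
  [exact (t7 d) | exact (t8 d) | reflexivity | reflexivity | reflexivity | mgu_tac | reflexivity | dn_tac].
Qed.

Lemma t10 d : CDprov d (I (I (I (V 9) (V 10)) (I (V 12) (V 9))) (I (I (V 9) (V 10)) (I (V 12) (V 10)))).
Proof.
  apply (cd_conc d (I (I (V 0) (I (V 1) (V 2))) (I (I (V 0) (V 1)) (I (V 0) (V 2)))) (I (I (V 6) (V 7)) (I (I (V 9) (V 6)) (I (V 9) (V 7)))) 3 (I (V 0) (I (V 1) (V 2))) (I (I (V 0) (V 1)) (I (V 0) (V 2))) [(0, (I (V 9) (V 10))); (1, (I (V 12) (V 9))); (2, (I (V 12) (V 10)))]);
  [exact (ax_H2 d) | exact (t4 d) | reflexivity | reflexivity | reflexivity | mgu_tac | reflexivity | dn_tac].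
Qed.

Lemma t11 d : CDprov d (I (I (V 12) (V 12)) (I (V 12) (V 12))).
Proof.
  apply (cd_conc d (I (I (I (V 9) (V 10)) (I (V 12) (V 9))) (I (I (V 9) (V 10)) (I (V 12) (V 10)))) (I (V 5) (V 5)) 13 (I (I (V 9) (V 10)) (I (V 12) (V 9))) (I (I (V 9) (V 10)) (I (V 12) (V 10))) [(9, (V 12)); (10, (V 12)); (18, (I (V 12) (V 12)))]);
  [exact (t10 d) | exact (t1 d) | reflexivity | reflexivity | reflexivity | mgu_tac | reflexivity | dn_tac].
Qed.

Lemma t12 d : CDprov d (I (I (V 26) (V 27)) (I (I (V 19) (I (V 29) (V 26))) (I (V 19) (I (V 29) (V 27))))).
Proof.
  apply (cd_conc d (I (I (V 9) (I (V 16) (V 17))) (I (V 9) (I (I (V 19) (V 16)) (I (V 19) (V 17))))) (I (I (V 6) (V 7)) (I (I (V 9) (V 6)) (I (V 9) (V 7)))) 20 (I (V 9) (I (V 16) (V 17))) (I (V 9) (I (I (V 19) (V 16)) (I (V 19) (V 17)))) [(9, (I (V 26) (V 27))); (16, (I (V 29) (V 26))); (17, (I (V 29) (V 27)))]);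
  [exact (t5 d) | exact (t4 d) | reflexivity | reflexivity | reflexivity | mgu_tac | reflexivity | dn_tac].
Qed.

Lemma t13 d : CDprov d (I (I (V 49) (I (V 59) (V 56))) (I (I (V 56) (V 57)) (I (V 49) (I (V 59) (V 57))))).
Proof.
  apply (cd_conc d (I (I (V 29) (I (V 28) (V 25))) (I (V 28) (I (V 29) (V 25)))) (I (I (V 26) (V 27)) (I (I (V 19) (I (V 29) (V 26))) (I (V 19) (I (V 29) (V 27))))) 30 (I (V 29) (I (V 28) (V 25))) (I (V 28) (I (V 29) (V 25))) [(25, (I (V 49) (I (V 59) (V 57)))); (28, (I (V 49) (I (V 59) (V 56)))); (29, (I (V 56) (V 57)))]);
  [exact (t9 d) | exact (t12 d) | reflexivity | reflexivity | reflexivity | mgu_tac | reflexivity | dn_tac].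
Qed.

Lemma t14 d : CDprov d (I (I (V 9) (I (V 59) (I (V 69) (V 66)))) (I (V 9) (I (I (V 66) (V 67)) (I (V 59) (I (V 69) (V 67)))))).
Proof.
  apply (cd_conc d (I (I (V 6) (V 7)) (I (I (V 9) (V 6)) (I (V 9) (V 7)))) (I (I (V 49) (I (V 59) (V 56))) (I (I (V 56) (V 57)) (I (V 49) (I (V 59) (V 57))))) 10 (I (V 6) (V 7)) (I (I (V 9) (V 6)) (I (V 9) (V 7))) [(6, (I (V 59) (I (V 69) (V 66)))); (7, (I (I (V 66) (V 67)) (I (V 59) (I (V 69) (V 67)))))]);
  [exact (t4 d) | exact (t13 d) | reflexivity | reflexivity | reflexivity | mgu_tac | reflexivity | dn_tac].
Qed.

Lemma t15 d : CDprov d (I (I (V 39) (V 36)) (I (I (V 36) (V 37)) (I (V 39) (V 37)))).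
Proof.
  apply (cd_conc d (I (I (V 29) (I (V 28) (V 25))) (I (V 28) (I (V 29) (V 25)))) (I (I (V 6) (V 7)) (I (I (V 9) (V 6)) (I (V 9) (V 7)))) 30 (I (V 29) (I (V 28) (V 25))) (I (V 28) (I (V 29) (V 25))) [(25, (I (V 39) (V 37))); (28, (I (V 39) (V 36))); (29, (I (V 36) (V 37)))]);
  [exact (t9 d) | exact (t4 d) | reflexivity | reflexivity | reflexivity | mgu_tac | reflexivity | dn_tac].
Qed.

Lemma t16 d : CDprov d (I (I (V 109) (V 106)) (I (I (V 107) (V 67)) (I (I (V 106) (V 107)) (I (V 109) (V 67))))).
Proof.
  apply (cd_conc d (I (I (V 9) (I (V 59) (I (V 69) (V 66)))) (I (V 9) (I (I (V 66) (V 67)) (I (V 59) (I (V 69) (V 67)))))) (I (I (V 39) (V 36)) (I (I (V 36) (V 37)) (I (V 39) (V 37)))) 70 (I (V 9) (I (V 59) (I (V 69) (V 66)))) (I (V 9) (I (I (V 66) (V 67)) (I (V 59) (I (V 69) (V 67))))) [(9, (I (V 109) (V 106))); (59, (I (V 106) (V 107))); (66, (V 107)); (69, (V 109))]);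
  [exact (t14 d) | exact (t15 d) | reflexivity | reflexivity | reflexivity | mgu_tac | reflexivity | dn_tac].
Qed.

Lemma t17 d : CDprov d (I (V 20) (I (I (V 19) (V 21)) (I (V 19) (V 20)))).
Proof.
  apply (cd_conc d (I (I (V 9) (I (V 16) (V 17))) (I (V 9) (I (I (V 19) (V 16)) (I (V 19) (V 17))))) (I (V 0) (I (V 1) (V 0))) 20 (I (V 9) (I (V 16) (V 17))) (I (V 9) (I (I (V 19) (V 16)) (I (V 19) (V 17)))) [(9, (V 20)); (16, (V 21)); (17, (V 20))]);
  [exact (t5 d) | exact (ax_H1 d) | reflexivity | reflexivity | reflexivity | mgu_tac | reflexivity | dn_tac].
Qed.

Lemma t18 d : CDprov d (I (I (V 49) (V 51)) (I (V 50) (I (V 49) (V 50)))).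
Proof.
  apply (cd_conc d (I (I (V 29) (I (V 28) (V 25))) (I (V 28) (I (V 29) (V 25)))) (I (V 20) (I (I (V 19) (V 21)) (I (V 19) (V 20)))) 30 (I (V 29) (I (V 28) (V 25))) (I (V 28) (I (V 29) (V 25))) [(25, (I (V 49) (V 50))); (28, (I (V 49) (V 51))); (29, (V 50))]);
  [exact (t9 d) | exact (t17 d) | reflexivity | reflexivity | reflexivity | mgu_tac | reflexivity | dn_tac].
Qed.

Lemma t19 d : CDprov d (I (V 50) (I (I (V 64) (V 64)) (V 50))).
Proof.
  apply (cd_conc d (I (I (V 49) (V 51)) (I (V 50) (I (V 49) (V 50)))) (I (I (V 12) (V 12)) (I (V 12) (V 12))) 52 (I (V 49) (V 51)) (I (V 50) (I (V 49) (V 50))) [(49, (I (V 64) (V 64))); (51, (I (V 64) (V 64)))]);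
  [exact (t18 d) | exact (t11 d) | reflexivity | reflexivity | reflexivity | mgu_tac | reflexivity | dn_tac].
Qed.

Lemma t20 d : CDprov d (I (I (V 9) (I (V 10) (N (V 10)))) (I (V 9) (N (V 10)))).
Proof.
  apply (cd_conc d (I (I (V 6) (V 7)) (I (I (V 9) (V 6)) (I (V 9) (V 7)))) (I (I (V 0) (N (V 0))) (N (V 0))) 10 (I (V 6) (V 7)) (I (I (V 9) (V 6)) (I (V 9) (V 7))) [(6, (I (V 10) (N (V 10)))); (7, (N (V 10)))]);
  [exact (t4 d) | exact (ax_H3 d) | reflexivity | reflexivity | reflexivity | mgu_tac | reflexivity | dn_tac].
Qed.

Lemma t21 d : CDprov d (I (I (V 9) (I (V 19) (I (V 20) (N (V 20))))) (I (V 9) (I (V 19) (N (V 20))))).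
Proof.
  apply (cd_conc d (I (I (V 6) (V 7)) (I (I (V 9) (V 6)) (I (V 9) (V 7)))) (I (I (V 9) (I (V 10) (N (V 10)))) (I (V 9) (N (V 10)))) 10 (I (V 6) (V 7)) (I (I (V 9) (V 6)) (I (V 9) (V 7))) [(6, (I (V 19) (I (V 20) (N (V 20))))); (7, (I (V 19) (N (V 20))))]);
  [exact (t4 d) | exact (t20 d) | reflexivity | reflexivity | reflexivity | mgu_tac | reflexivity | dn_tac].
Qed.

Lemma t22 d : CDprov d (I (I (V 9) (I (V 39) (I (V 38) (V 35)))) (I (V 9) (I (V 38) (I (V 39) (V 35))))).
Proof.
  apply (cd_conc d (I (I (V 6) (V 7)) (I (I (V 9) (V 6)) (I (V 9) (V 7)))) (I (I (V 29) (I (V 28) (V 25))) (I (V 28) (I (V 29) (V 25)))) 10 (I (V 6) (V 7)) (I (I (V 9) (V 6)) (I (V 9) (V 7))) [(6, (I (V 39) (I (V 38) (V 35)))); (7, (I (V 38) (I (V 39) (V 35))))]);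
  [exact (t4 d) | exact (t9 d) | reflexivity | reflexivity | reflexivity | mgu_tac | reflexivity | dn_tac].
Qed.

Lemma t23 d : CDprov d (I (I (V 9) (V 10)) (I (V 9) (I (N (V 10)) (V 11)))).
Proof.
  apply (cd_conc d (I (I (V 6) (V 7)) (I (I (V 9) (V 6)) (I (V 9) (V 7)))) (I (V 0) (I (N (V 0)) (V 1))) 10 (I (V 6) (V 7)) (I (I (V 9) (V 6)) (I (V 9) (V 7))) [(6, (V 10)); (7, (I (N (V 10)) (V 11)))]);
  [exact (t4 d) | exact (ax_H4 d) | reflexivity | reflexivity | reflexivity | mgu_tac | reflexivity | dn_tac].
Qed.

Lemma t24 d : CDprov d (I (I (V 49) (V 50)) (I (N (V 50)) (I (V 49) (V 51)))).
Proof.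
  apply (cd_conc d (I (I (V 9) (I (V 39) (I (V 38) (V 35)))) (I (V 9) (I (V 38) (I (V 39) (V 35))))) (I (I (V 9) (V 10)) (I (V 9) (I (N (V 10)) (V 11)))) 40 (I (V 9) (I (V 39) (I (V 38) (V 35)))) (I (V 9) (I (V 38) (I (V 39) (V 35)))) [(9, (I (V 49) (V 50))); (35, (V 51)); (38, (N (V 50))); (39, (V 49))]);
  [exact (t22 d) | exact (t23 d) | reflexivity | reflexivity | reflexivity | mgu_tac | reflexivity | dn_tac].
Qed.

Lemma t25 d : CDprov d (I (I (V 70) (V 71)) (I (N (V 71)) (N (V 70)))).
Proof.
  apply (cd_conc d (I (I (V 9) (I (V 19) (I (V 20) (N (V 20))))) (I (V 9) (I (V 19) (N (V 20))))) (I (I (V 49) (V 50)) (I (N (V 50)) (I (V 49) (V 51)))) 21 (I (V 9) (I (V 19) (I (V 20) (N (V 20))))) (I (V 9) (I (V 19) (N (V 20)))) [(9, (I (V 70) (V 71))); (19, (N (V 71))); (20, (V 70)); (72, (N (V 70)))]);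
  [exact (t21 d) | exact (t24 d) | reflexivity | reflexivity | reflexivity | mgu_tac | reflexivity | dn_tac].
Qed.

Lemma t26 d : CDprov d (I (I (V 9) (I (V 10) (I (V 11) (V 12)))) (I (V 9) (I (I (V 10) (V 11)) (I (V 10) (V 12))))).
Proof.
  apply (cd_conc d (I (I (V 6) (V 7)) (I (I (V 9) (V 6)) (I (V 9) (V 7)))) (I (I (V 0) (I (V 1) (V 2))) (I (I (V 0) (V 1)) (I (V 0) (V 2)))) 10 (I (V 6) (V 7)) (I (I (V 9) (V 6)) (I (V 9) (V 7))) [(6, (I (V 10) (I (V 11) (V 12)))); (7, (I (I (V 10) (V 11)) (I (V 10) (V 12))))]);
  [exact (t4 d) | exact (ax_H2 d) | reflexivity | reflexivity | reflexivity | mgu_tac | reflexivity | dn_tac].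
Qed.

Ltac nsimp := repeat match goal with
 | |- context [Nat.eqb ?x ?y] => destruct (Nat.eqb_spec x y); try lia
 | |- context [Nat.ltb ?x ?y] => destruct (Nat.ltb_spec x y); try lia
 | |- context [Nat.leb ?x ?y] => destruct (Nat.leb_spec x y); try lia end.

Definition ren1 (a h K : nat) (x : nat) : nat := if Nat.eqb x a then h else K + x.

Lemma ren1_inj a h K : h < K -> forall x y, ren1 a h K x = ren1 a h K y -> x = y.
Proof. unfold ren1; intros Hh x y. destruct (Nat.eqb_spec x a), (Nat.eqb_spec y a); lia. Qed.

Lemma add_inj K : forall x y, K + x = K + y -> x = y.
Proof. intros; lia. Qed.

Definition dnok (d : bool) (f : form) := d = true -> ~ has_dn f.

Definition ctx (l : list nat) (f : form) := fold_right (fun v acc => I (V v) acc) f l.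
Definition ctxI (l : list nat) (f : form) := fold_right (fun v acc => I (I (V v) (V v)) acc) f l.

Lemma occurs_ctx x l f : occurs x (ctx l f) <-> In x l \/ occurs x f.
Proof. induction l; simpl; [tauto|]. rewrite IHl. split; intuition. Qed.
Lemma occurs_ctxI x l f : occurs x (ctxI l f) <-> In x l \/ occurs x f.
Proof. induction l; simpl; [tauto|]. rewrite IHl. split; intuition. Qed.
Lemma has_dn_ctx l f : has_dn (ctx l f) <-> has_dn f.
Proof. induction l; simpl; [tauto|]. rewrite IHl. tauto. Qed.
Lemma has_dn_ctxI l f : has_dn (ctxI l f) <-> has_dn f.
Proof. induction l; simpl; [tauto|]. rewrite IHl. tauto. Qed.

Lemma subst_ctx sg l f : (forall v, In v l -> sg v = I (V v) (V v)) ->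
  subst sg (ctx l f) = ctxI l (subst sg f).
Proof. induction l; simpl; intros H; [reflexivity|]. rewrite H, IHl; auto. Qed.
Lemma subst_ctx_id sg l f : (forall v, In v l -> sg v = V v) ->
  subst sg (ctx l f) = ctx l (subst sg f).
Proof. induction l; simpl; intros H; [reflexivity|]. rewrite H, IHl; auto. Qed.
Lemma subst_ctxI_id sg l f : (forall v, In v l -> sg v = V v) ->
  subst sg (ctxI l f) = ctxI l (subst sg f).
Proof. induction l; simpl; intros H; [reflexivity|]. rewrite H, IHl; auto. Qed.

Lemma subst_fix sg f : (forall x, occurs x f -> sg x = V x) -> subst sg f = f.
Proof. intros H. rewrite <- (subst_id f) at 2. apply subst_ext. auto. Qed.

Lemma ctxI_app l1 l2 f : ctxI (l1 ++ l2) f = ctxI l1 (ctxI l2 f).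
Proof. induction l1; simpl; congruence. Qed.

Lemma mp d a b : CDprov d (I a b) -> CDprov d a -> dnok d b -> CDprov d b.
Proof. intros H1 H2 H3. apply (P1 d a b a V); auto. apply subst_id. Qed.

Lemma Lift1 d P Q h : CDprov d (I P Q) -> ~ occurs h P -> ~ occurs h Q ->
  dnok d (I P Q) -> CDprov d (I (I (V h) P) (I (V h) Q)).
Proof.
  intros HPQ HP HQ Hdn.
  set (K := S (Nat.max h (maxvar (I P Q)))).
  assert (Hb : CDprov d (I (I (V (K+6)) (V (K+7))) (I (I (V h) (V (K+6))) (I (V h) (V (K+7)))))).
  { pose proof (cd_variant d _ (ren1 9 h K) (t4 d) (ren1_inj 9 h K ltac:(unfold K; lia))) as H.
    exact H. }
  set (sg := fun z => if Nat.eqb z (K+6) then P else if Nat.eqb z (K+7) then Q else V z).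
  assert (E : subst sg (I (I (V h) (V (K+6))) (I (V h) (V (K+7)))) = I (I (V h) P) (I (V h) Q)).
  { unfold sg; simpl. nsimp; reflexivity. }
  rewrite <- E. apply (P2 d (I (V (K+6)) (V (K+7))) _ (I P Q)); auto.
  - unfold sg; simpl. nsimp; reflexivity.
  - intros x Hx HnA. simpl in Hx, HnA.
    assert (x = h) by intuition. subst x. split.
    + unfold sg; nsimp; reflexivity.
    + simpl; tauto.
  - rewrite E. intros Hd; apply Hdn in Hd; simpl in *; tauto.
Qed.

Lemma Lift2 d P Q R h : CDprov d (I P (I Q R)) -> ~ occurs h P -> ~ occurs h Q -> ~ occurs h R ->
  dnok d (I P (I Q R)) -> CDprov d (I (I (V h) P) (I (I (V h) Q) (I (V h) R))).
Proof.
  intros H HP HQ HR Hdn.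
  assert (H1 := Lift1 d P (I Q R) h H HP ltac:(simpl; tauto) Hdn).
  set (K := S (Nat.max h (maxvar (I P (I Q R))))).
  assert (Hb := cd_variant d _ (Nat.add K) (t26 d) (add_inj K)). unfold ren in Hb; simpl in Hb.
  set (sg := fun z => if Nat.eqb z (K+9) then I (V h) P else if Nat.eqb z (K+10) then V h
     else if Nat.eqb z (K+11) then Q else if Nat.eqb z (K+12) then R else V z).
  match type of Hb with CDprov _ (I ?A ?B) =>
    assert (E : subst sg B = I (I (V h) P) (I (I (V h) Q) (I (V h) R)));
    [unfold sg; simpl; nsimp; reflexivity|];
    rewrite <- E; apply (P2 d A B _ sg Hb H1) end.
  - unfold sg; simpl; nsimp; reflexivity.
  - intros x Hx HnA. exfalso. apply HnA. simpl in Hx |- *. intuition.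
  - rewrite E. intros Hd; apply Hdn in Hd; simpl in *; tauto.
Qed.

Lemma in_seq_iff x a n : In x (seq a n) <-> a <= x < a + n.
Proof. rewrite in_seq. lia. Qed.

Lemma LiftS1 d P Q a n : CDprov d (I P Q) ->
  (forall x, occurs x (I P Q) -> x < a \/ a + n <= x) -> dnok d (I P Q) ->
  CDprov d (I (ctx (seq a n) P) (ctx (seq a n) Q)).
Proof.
  revert a. induction n; intros a H Hx Hdn; [exact H|].
  simpl. apply Lift1.
  - apply IHn; auto. intros x Hx'. apply Hx in Hx'. lia.
  - rewrite occurs_ctx, in_seq_iff. intros [?|Ho]; [lia|].
    assert (occurs a (I P Q)) by (simpl; auto). apply Hx in H0; lia.
  - rewrite occurs_ctx, in_seq_iff. intros [?|Ho]; [lia|].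
    assert (occurs a (I P Q)) by (simpl; auto). apply Hx in H0; lia.
  - intros Hd; apply Hdn in Hd. simpl in *. rewrite !has_dn_ctx. tauto.
Qed.

Lemma LiftS2 d P Q R a n : CDprov d (I P (I Q R)) ->
  (forall x, occurs x (I P (I Q R)) -> x < a \/ a + n <= x) -> dnok d (I P (I Q R)) ->
  CDprov d (I (ctx (seq a n) P) (I (ctx (seq a n) Q) (ctx (seq a n) R))).
Proof.
  revert a. induction n; intros a H Hx Hdn; [exact H|].
  assert (Ha : ~ occurs a (I P (I Q R))) by (intros Ho; apply Hx in Ho; lia).
  simpl in Ha.
  simpl. apply Lift2.
  - apply IHn; auto. intros x Hx'. apply Hx in Hx'. lia.
  - rewrite occurs_ctx, in_seq_iff. intros [?|Ho]; [lia|tauto].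
  - rewrite occurs_ctx, in_seq_iff. intros [?|Ho]; [lia|tauto].
  - rewrite occurs_ctx, in_seq_iff. intros [?|Ho]; [lia|tauto].
  - intros Hd; apply Hdn in Hd. simpl in *. rewrite !has_dn_ctx. tauto.
Qed.

Lemma Append d a j f : CDprov d (ctxI (seq a j) f) -> ~ occurs (a + j) f -> dnok d f ->
  CDprov d (ctxI (seq a (S j)) f).
Proof.
  intros H Hf Hdn.
  set (w := a + j).
  set (K := S (Nat.max w (maxvar f))).
  assert (Hk : CDprov d (I (V (K+50)) (I (I (V w) (V w)) (V (K+50))))).
  { exact (cd_variant d _ (ren1 64 w K) (t19 d) (ren1_inj 64 w K ltac:(unfold K; lia))). }
  apply LiftS1 with (a := a) (n := j) in Hk.
  2:{ intros x Hx. simpl in Hx. unfold w, K in *. lia. }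
  2:{ intros _; simpl; tauto. }
  set (sg := fun z => if Nat.eqb z (K+50) then f else if (a <=? z) && (z <? a + j) then I (V z) (V z) else V z).
  assert (E : subst sg (ctx (seq a j) (I (I (V w) (V w)) (V (K + 50)))) = ctxI (seq a (S j)) f).
  { rewrite subst_ctx.
    - rewrite seq_S, ctxI_app. simpl. unfold sg. fold w. nsimp. simpl. reflexivity.
    - intros v Hv. rewrite in_seq_iff in Hv. unfold sg. unfold K, w in *. nsimp. reflexivity. }
  rewrite <- E. apply (P2 d _ _ _ sg Hk H).
  - rewrite subst_ctx.
    + simpl. unfold sg. nsimp. reflexivity.
    + intros v Hv. rewrite in_seq_iff in Hv. unfold sg. unfold K, w in *. nsimp. reflexivity.
  - intros x Hx HnA. rewrite occurs_ctx in Hx, HnA. simpl in Hx, HnA.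
    assert (x = w) by intuition. subst x. split.
    + unfold sg, K, w. nsimp. reflexivity.
    + rewrite occurs_ctxI, in_seq_iff. unfold w. intros [?|?]; [lia|tauto].
  - rewrite E. intros Hd. rewrite has_dn_ctxI. auto.
Qed.

Lemma Prepend d a j f : CDprov d (ctxI (seq (S a) j) f) -> ~ occurs a f -> dnok d f ->
  CDprov d (ctxI (seq a (S j)) f).
Proof.
  intros H Hf Hdn.
  set (K := S a).
  assert (Hk : CDprov d (I (V (K+50)) (I (I (V a) (V a)) (V (K+50))))).
  { exact (cd_variant d _ (ren1 64 a K) (t19 d) (ren1_inj 64 a K ltac:(unfold K; lia))). }
  set (sg := fun z => if Nat.eqb z (K+50) then ctxI (seq (S a) j) f else V z).
  assert (E : subst sg (I (I (V a) (V a)) (V (K+50))) = ctxI (seq a (S j)) f).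
  { simpl. unfold sg, K. nsimp. reflexivity. }
  rewrite <- E. apply (P2 d _ _ _ sg Hk H).
  - simpl. unfold sg. nsimp. reflexivity.
  - intros x Hx HnA. simpl in Hx, HnA. assert (x = a) by intuition. subst x. split.
    + unfold sg, K. nsimp. reflexivity.
    + rewrite occurs_ctxI, in_seq_iff. intros [?|?]; [lia|tauto].
  - rewrite E. intros Hd. rewrite has_dn_ctxI. auto.
Qed.

Lemma PI d m k : k < m -> CDprov d (ctxI (seq 0 m) (I (V k) (V k))).
Proof.
  intros Hkm.
  assert (H0 : CDprov d (ctxI (seq k 1) (I (V k) (V k)))).
  { exact (cd_variant d _ (ren1 12 k (S k)) (t11 d) (ren1_inj 12 k (S k) ltac:(lia))). }
  assert (H1 : forall j, k + S j <= m -> CDprov d (ctxI (seq k (S j)) (I (V k) (V k)))).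
  { induction j; intros Hj; auto. apply Append.
    - apply IHj; lia.
    - simpl; lia.
    - intros _; simpl; tauto. }
  assert (H2 : forall i, i <= k -> CDprov d (ctxI (seq (k - i) (i + (m - k))) (I (V k) (V k)))).
  { induction i; intros Hi.
    - replace (k - 0) with k by lia. destruct (m - k) eqn:E; [lia|]. simpl. apply H1; lia.
    - replace (k - S i) with (k - S i) by lia.
      replace (S i + (m - k)) with (S (i + (m - k))) by lia.
      apply Prepend.
      + replace (S (k - S i)) with (k - i) by lia. apply IHi; lia.
      + simpl; lia.
      + intros _; simpl; tauto. }
  specialize (H2 k (le_n k)). replace (k - k) with 0 in H2 by lia.
  replace (k + (m - k)) with m in H2 by lia. exact H2.
Qed.

Lemma Claim d m u : (forall x, occurs x u -> x < m) -> dnok d u ->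
  CDprov d (ctxI (seq 0 m) (I u u)).
Proof.
  induction u as [p|u1 IH1 u2 IH2|u1 IH1]; intros Hm Hdn.
  - apply PI. apply Hm. reflexivity.
  - assert (Hm1 : forall x, occurs x u1 -> x < m) by (intros; apply Hm; simpl; auto).
    assert (Hm2 : forall x, occurs x u2 -> x < m) by (intros; apply Hm; simpl; auto).
    assert (Hd1 : dnok d u1) by (intros Hd Hc; apply (Hdn Hd); simpl; auto).
    assert (Hd2 : dnok d u2) by (intros Hd Hc; apply (Hdn Hd); simpl; auto).
    specialize (IH1 Hm1 Hd1). specialize (IH2 Hm2 Hd2).
    assert (Hq := cd_variant d _ (Nat.add m) (t16 d) (add_inj m)). unfold ren in Hq; simpl in Hq.
    apply LiftS2 with (a := 0) (n := m) in Hq.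
    2:{ intros x Hx. simpl in Hx. lia. }
    2:{ intros _; simpl; tauto. }
    set (L := seq 0 m) in *.
    set (sg := fun z => if z <? m then I (V z) (V z) else if (Nat.eqb z (m+109)) || (Nat.eqb z (m+106)) then u1 else V z).
    assert (HinL : forall v, In v L -> v < m) by (intros v Hv; unfold L in Hv; rewrite in_seq_iff in Hv; lia).
    assert (Hsl : forall v, In v L -> sg v = I (V v) (V v)) by (intros v Hv; apply HinL in Hv; unfold sg; nsimp; reflexivity).
    assert (E1 : subst sg (I (ctx L (I (V (m + 107)) (V (m + 67))))
                 (ctx L (I (I (V (m + 106)) (V (m + 107))) (I (V (m + 109)) (V (m + 67))))))
            = I (ctxI L (I (V (m+107)) (V (m+67)))) (ctxI L (I (I u1 (V (m+107))) (I u1 (V (m+67)))))).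
    { simpl. rewrite !subst_ctx by auto. simpl. unfold sg. nsimp. reflexivity. }
    assert (Hs1 := P2 d _ _ _ sg Hq IH1).
    rewrite E1 in Hs1.
    assert (Hs1' : CDprov d (I (ctxI L (I (V (m+107)) (V (m+67)))) (ctxI L (I (I u1 (V (m+107))) (I u1 (V (m+67))))))).
    { apply Hs1.
      - rewrite subst_ctx by auto. simpl. unfold sg. nsimp. reflexivity.
      - intros x Hx HnA. simpl in Hx. rewrite occurs_ctx in Hx. rewrite occurs_ctx in Hx. rewrite occurs_ctx in HnA. simpl in Hx, HnA.
        assert (Hx' : x = m + 107 \/ x = m + 67) by intuition.
        split.
        + unfold sg. nsimp; reflexivity.
        + rewrite occurs_ctxI. simpl. intros [Hc|[Hc|Hc]]; [apply HinL in Hc; lia| |];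
          apply Hm1 in Hc; lia.
      - intros Hd. simpl. rewrite !has_dn_ctxI. simpl. specialize (Hd1 Hd). tauto. }
    set (sg2 := fun z => if (Nat.eqb z (m+107)) || (Nat.eqb z (m+67)) then u2 else V z).
    assert (Hfix1 : subst sg2 u1 = u1).
    { apply subst_fix. intros x Hx. apply Hm1 in Hx. unfold sg2. nsimp. reflexivity. }
    assert (Hsl2 : forall v, In v L -> sg2 v = V v) by (intros v Hv; apply HinL in Hv; unfold sg2; nsimp; reflexivity).
    assert (E2 : subst sg2 (ctxI L (I (I u1 (V (m+107))) (I u1 (V (m+67))))) = ctxI L (I (I u1 u2) (I u1 u2))).
    { rewrite subst_ctxI_id by auto. simpl. rewrite Hfix1. unfold sg2. nsimp. reflexivity. }
    rewrite <- E2. apply (P2 d _ _ _ sg2 Hs1' IH2).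
    + rewrite subst_ctxI_id by auto. simpl. unfold sg2. nsimp. reflexivity.
    + intros x Hx HnA. exfalso. rewrite occurs_ctxI in Hx, HnA. simpl in Hx, HnA.
      apply HnA. destruct Hx as [Hx|[[Hx|Hx]|[Hx|Hx]]]; auto; left;
        (apply Hm1 in Hx || idtac); unfold L; rewrite in_seq_iff; lia.
    + rewrite E2. intros Hd. rewrite has_dn_ctxI. specialize (Hdn Hd). simpl in *. tauto.
  - assert (Hm1 : forall x, occurs x u1 -> x < m) by (intros; apply Hm; simpl; auto).
    assert (Hd1 : dnok d u1) by (intros Hd Hc; apply (Hdn Hd); simpl; auto).
    specialize (IH1 Hm1 Hd1).
    assert (Hq := cd_variant d _ (Nat.add m) (t25 d) (add_inj m)). unfold ren in Hq; simpl in Hq.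
    apply LiftS1 with (a := 0) (n := m) in Hq.
    2:{ intros x Hx. simpl in Hx. lia. }
    2:{ intros _; simpl; tauto. }
    set (L := seq 0 m) in *.
    set (sg := fun z => if z <? m then I (V z) (V z) else if (Nat.eqb z (m+70)) || (Nat.eqb z (m+71)) then u1 else V z).
    assert (HinL : forall v, In v L -> v < m) by (intros v Hv; unfold L in Hv; rewrite in_seq_iff in Hv; lia).
    assert (Hsl : forall v, In v L -> sg v = I (V v) (V v)) by (intros v Hv; apply HinL in Hv; unfold sg; nsimp; reflexivity).
    assert (E1 : subst sg (ctx L (I (N (V (m + 71))) (N (V (m + 70))))) = ctxI L (I (N u1) (N u1))).
    { rewrite subst_ctx by auto. simpl. unfold sg. nsimp. reflexivity. }
    rewrite <- E1. apply (P2 d _ _ _ sg Hq IH1).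
    + rewrite subst_ctx by auto. simpl. unfold sg. nsimp. reflexivity.
    + intros x Hx HnA. exfalso. rewrite occurs_ctx in Hx, HnA. simpl in Hx, HnA. tauto.
    + rewrite E1. intros Hd. rewrite has_dn_ctxI. specialize (Hdn Hd). simpl in *. tauto.
Qed.

Lemma discharge d l f : CDprov d (ctxI l f) -> dnok d f -> CDprov d f.
Proof.
  induction l as [|v l IH]; simpl; intros H Hdn; auto.
  apply IH; auto. apply (P1 d (I (V v) (V v)) _ (I (V 5) (V 5)) (fun _ => V v) H (t1 d)).
  - reflexivity.
  - intros Hd. rewrite has_dn_ctxI. auto.
Qed.

Lemma Id d u : dnok d u -> CDprov d (I u u).
Proof.
  intros Hdn. apply discharge with (seq 0 (S (maxvar u))).
  - apply Claim; auto. intros x Hx. apply occurs_le in Hx. lia.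
  - intros Hd; simpl. specialize (Hdn Hd). tauto.
Qed.

Lemma ax_cd d a : is_axiom a -> CDprov d a.
Proof. intros Ha. apply cd_ax with a; auto. apply variant_refl. Qed.

Lemma inst d a s : is_axiom a -> dnok d (subst s a) -> CDprov d (subst s a).
Proof.
  intros Ha Hdn. apply (P1 d (subst s a) (subst s a) a s); auto.
  - apply Id; auto.
  - apply ax_cd; auto.
Qed.

Lemma mp_all b : MPprov b -> forall s, CDprov false (subst s b).
Proof.
  induction 1; intros s0.
  - apply inst; [assumption | unfold dnok; intros Hd; discriminate].
  - rewrite subst_comp. apply IHMPprov.
  - apply mp with (subst s0 a); [apply IHMPprov1 | apply IHMPprov2 | unfold dnok; intros Hd; discriminate].
Qed.

Lemma cd_mp b : CDprov false b -> MPprov b.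
Proof.
  induction 1 as [a f Ha Hv | M C M' C' A B s f HM IHM HC IHC HM' HC' HMe Hdis Hmgu Hv Hdn].
  - destruct Hv as [r [_ ->]]. unfold ren. apply mp_sub. apply mp_ax; auto.
  - destruct Hv as [r [_ ->]]. destruct HM' as [r1 [_ HM']]. destruct HC' as [r2 [_ HC']].
    destruct Hmgu as [Hu _]. unfold unifier in Hu.
    unfold ren in *. apply mp_sub.
    apply mp_mp with (subst s A).
    + change (MPprov (subst s (I A B))). rewrite <- HMe, HM'. apply mp_sub, mp_sub; auto.
    + rewrite Hu, HC'. apply mp_sub, mp_sub; auto.
Qed.

Theorem theorem7 :
  (forall b : form, CDprov false b <-> MPprov b) /\
  (forall b : form, MPinst_dnf b -> CDprov true b).
Proof.
  split.
  - intros b; split.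
    + apply cd_mp.
    + intros H. pose proof (mp_all b H V) as H'. rewrite subst_id in H'. exact H'.
  - induction 1 as [a s Ha Hd | a b Hab IHab Ha IHa Hd].
    + apply inst; [assumption | intros _; exact Hd].
    + apply mp with a; [exact IHab | exact IHa | intros _; exact Hd].
Qed.
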